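(* Let $t$ be a closed $\Sigma'$-term, $\phi$ a dAEL sentence over $\Sigma$, $\mathcal B$ a universally consistent (consistent) distributed belief pair, and $J$ a $\Sigma'$-structure. Then $\tau_{\mathit{formula}}(t,\phi)^{\tau_{\mathit{beliefpair}}(\mathcal B),J}=\phi^{\mathcal B,J_t}$.
   Context: Standing setup (dAEL). $\Sigma=\Sigma_o\uplus\Sigma_s$ is a first-order vocabulary (objective and subjective symbols). A nonempty domain $D$ and a $\Sigma_o$-structure $I_o$ with domain $D$ are fixed, as is a set of agents $\mathcal{A}\subseteq D$. For each $A\in\mathcal{A}$ there is a constant $A\in\Sigma_o$ with $A^{I_o}=A$, and $\Sigma_o$ contains a unary predicate $\mathrm{Apred}$ with $\mathrm{Apred}^{I_o}=\mathcal{A}$. ''Structure'' means a $\Sigma$-structure with domain $D$ that agrees with $I_o$ on $\Sigma_o$. Formulas of dAEL are built from atoms $P(\bar t)$ ($P\in\Sigma$ or equality) using $\wedge,\neg,\forall x$, and the modal rule: if $\varphi$ is a formula and $t$ a term then $K_t\varphi$ is a formula. Truth values are $\mathbf t,\mathbf f,\mathbf u$ with truth order $\mathbf f<_t\mathbf u<_t\mathbf t$; $\mathbf t^{-1}=\mathbf f$, $\mathbf f^{-1}=\mathbf t$, $\mathbf u^{-1}=\mathbf u$. A possible world structure (PWS) is a set of structures. A distributed possible world structure (DPWS) is a family $\mathcal Q=(\mathcal Q_A)_{A\in\mathcal A}$ of PWSs. A distributed belief pair (DBP) is a pair $\mathcal B=(\mathcal B^c,\mathcal B^l)$ of DPWSs,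 consistent if $\mathcal B^l_A\subseteq\mathcal B^c_A$ for all $A$. A DPWS $\mathcal Q$ is universally consistent if $\mathcal Q_A\ne\emptyset$ for all $A$; a DBP $\mathcal B$ is universally consistent if $\mathcal B^l$ is. Three-valued value $\varphi^{\mathcal B,I,a}$: atoms get their two-valued value in $I$; $\neg$ by ${}^{-1}$, $\wedge$ and $\forall$ by $\le_t$-glb (Kleene); $(K_t\varphi)^{\mathcal B,I,a}$ is $\mathbf t$ if $t^{I,a}\in\mathcal A$ and $\varphi^{\mathcal B,J,a}=\mathbf t$ for all $J\in\mathcal B^c_{t^{I,a}}$; $\mathbf f$ if $t^{I,a}\notin\mathcal A$ or $\varphi^{\mathcal B,J,a}=\mathbf f$ for some $J\in\mathcal B^l_{t^{I,a}}$; $\mathbf u$ otherwise; for sentences the assignment is omitted. Translation to AEL. $\Sigma'$ consists of all symbols of $\Sigma_o$ and all symbols of $\Sigma_s$ with arity increased by one. A fixed element $\delta\in D$ is chosen. A $\Sigma'$-structure always has domain $D$, agrees with $I_o$ on $\Sigma_o$, and is normal: for every $f\in\Sigma_s$, $f^J(\bar d,d)=\delta$ whenever $d\notin\mathcal A$, and for every relation $R\in\Sigma_s$, $(\bar d,d)\notin R^J$ whenever $d\notin\mathcal A$. AEL formulas over $\Sigma'$ are built like dAEL formulas but with a single unindexed modal operator $K$; an AEL belief pair is a pair $(P,S)$ of sets of $\Sigma'$-structures, and the three-valued AEL value is defined like the dAEL one except that $(K\varphi)^{(P,S),J,a}$ is $\mathbf t$ if $\varphi$ has value $\mathbf t$ at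 all $J'\in P$, $\mathbf f$ if it has value $\mathbf f$ at some $J'\in S$, and $\mathbf u$ otherwise. For a $\Sigma$-term $t$ and $\Sigma'$-term $s$, $t_s$ is defined by $x_s=x$ for variables, $f(t_1,\dots,t_n)_s=f((t_1)_s,\dots,(t_n)_s,s)$ for $f\in\Sigma_s$, $f(t_1,\dots,t_n)_s=f((t_1)_s,\dots,(t_n)_s)$ for $f\in\Sigma_o$. $\tau_{\mathit{formula}}(s,\cdot)$: $P(t_1,\dots,t_n)\mapsto P((t_1)_s,\dots,(t_n)_s,s)$ if $P\in\Sigma_s$, $P((t_1)_s,\dots,(t_n)_s)$ if $P\in\Sigma_o$ or equality; commutes with $\neg,\wedge,\forall x$; $\tau_{\mathit{formula}}(s,K_t\phi)=\exists x(x=t_s\wedge\mathrm{Apred}(x)\wedge K\,\tau_{\mathit{formula}}(x,\phi))$ for a fresh variable $x$. For a family $(I_A)_{A\in\mathcal A}$ of structures, $\tau_{\mathit{structure}}((I_A)_A)$ is the $\Sigma'$-structure interpreting $\Sigma_o$ as $I_o$, each $f\in\Sigma_s$ by $f(\bar d,d)=f^{I_d}(\bar d)$ if $d\in\mathcal A$ and $\delta$ otherwise, and each relation $R\in\Sigma_s$ by $(\bar d,d)\in R$ iff $d\in\mathcal A$ and $\bar d\in R^{I_d}$. $\tau_{\mathit{pws}}(\mathcal Q)=\{\tau_{\mathit{structure}}((I_A)_A): I_A\in\mathcal Q_A\text{ for all }A\in\mathcal A\}$, and $\tau_{\mathit{beliefpair}}(\mathcal B)=(\tau_{\mathit{pws}}(\mathcal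 B^c),\tau_{\mathit{pws}}(\mathcal B^l))$. For a $\Sigma'$-structure $J$ and a closed $\Sigma'$-term $t$, $J_t$ is the $\Sigma$-structure with domain $D$ that interprets $\Sigma_o$ as $J$ does and each $s\in\Sigma_s$ by $s^{J_t}(d_1,\dots,d_n)=s^J(d_1,\dots,d_n,t^J)$ (for relation symbols: $\bar d\in s^{J_t}$ iff $(\bar d,t^J)\in s^J$). *)

(* Defs.v *)
From Stdlib Require Import List Arith ClassicalEpsilon.
Import ListNotations.
Set Implicit Arguments.

(* Function and relation symbols of Sigma = Sigma_o (+) Sigma_s.  The same
   symbol sets are used for Sigma' (subjective symbols get arity + 1).
   Arguments of symbols are given as lists; [ar]/[arR] give the arity in
   Sigma.  The objective structure I_o is ([Io],[IoR]); the agents are the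
   elements of D satisfying [Ag]. *)
Record setup := {
  Fs : Type;
  Rs : Type;
  subj : Fs -> bool;    (* true iff in Sigma_s *)
  subjR : Rs -> bool;
  ar : Fs -> nat;
  arR : Rs -> nat;
  D : Type;
  Io : Fs -> list D -> D;
  IoR : Rs -> list D -> Prop;
  Ag : D -> Prop;
  Apred : Rs;
  delta : D;
  Apred_obj : subjR Apred = false;
  Apred_ar : arR Apred = 1;
  Apred_int : forall d, IoR Apred [d] <-> Ag d;
  agent_const : forall A, Ag A ->
     exists c : Fs, subj c = false /\ ar c = 0 /\ Io c [] = A
}.

Section Syntax.
Variable X : setup.

Inductive term : Type :=
| Var : nat -> term
| App : Fs X -> list term -> term.

(* dAEL formulas over Sigma *)
Inductive form : Type :=
| Atom : Rs X -> list term -> form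
| Eqf : term -> term -> form
| Neg : form -> form
| And : form -> form -> form
| All : nat -> form -> form
| Kt : term -> form -> form.

(* AEL formulas over Sigma' *)
Inductive aform : Type :=
| AAtom : Rs X -> list term -> aform
| AEqf : term -> term -> aform
| ANeg : aform -> aform
| AAnd : aform -> aform -> aform
| AAll : nat -> aform -> aform
| AK : aform -> aform.

Definition AEx (x : nat) (p : aform) : aform := ANeg (AAll x (ANeg p)).

Fixpoint wf_term (t : term) : Prop :=
  match t with
  | Var _ => True
  | App f ts => length ts = ar X f /\ (fix g l := match l with
                   | [] => True | u :: l' => wf_term u /\ g l' end) ts
  end.

Fixpoint wf_term' (t : term) : Prop :=
  match t with
  | Var _ => True
  | App f ts => length ts = ar X f + (if subj X f then 1 else 0) /\
                (fix g l := match l with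
                   | [] => True | u :: l' => wf_term' u /\ g l' end) ts
  end.

Fixpoint wf_form (p : form) : Prop :=
  match p with
  | Atom P ts => length ts = arR X P /\ Forall wf_term ts
  | Eqf t1 t2 => wf_term t1 /\ wf_term t2
  | Neg q => wf_form q
  | And q r => wf_form q /\ wf_form r
  | All _ q => wf_form q
  | Kt t q => wf_term t /\ wf_form q
  end.

Fixpoint occurs (x : nat) (t : term) : Prop :=
  match t with
  | Var y => x = y
  | App _ ts => (fix g l := match l with
                   | [] => False | u :: l' => occurs x u \/ g l' end) ts
  end.

Definition closed_term (t : term) : Prop := forall x, ~ occurs x t.

Fixpoint free_in (x : nat) (p : form) : Prop :=
  match p with
  | Atom _ ts => Exists (occurs x) ts
  | Eqf t1 t2 => occurs x t1 \/ occurs x t2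
  | Neg q => free_in x q
  | And q r => free_in x q \/ free_in x r
  | All y q => x <> y /\ free_in x q
  | Kt t q => occurs x t \/ free_in x q
  end.

Definition sentence (p : form) : Prop := forall x, ~ free_in x p.

Fixpoint maxv (t : term) : nat :=
  match t with
  | Var y => y
  | App _ ts => (fix g l := match l with
                   | [] => 0 | u :: l' => Nat.max (maxv u) (g l') end) ts
  end.

Fixpoint maxv_form (p : form) : nat :=
  match p with
  | Atom _ ts => fold_right (fun u n => Nat.max (maxv u) n) 0 ts
  | Eqf t1 t2 => Nat.max (maxv t1) (maxv t2)
  | Neg q => maxv_form q
  | And q r => Nat.max (maxv_form q) (maxv_form r)
  | All y q => Nat.max y (maxv_form q)
  | Kt t q => Nat.max (maxv t) (maxv_form q)
  end.

Fixpoint tr_term (s t : term) : term :=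
  match t with
  | Var x => Var x
  | App f ts => App f (map (tr_term s) ts ++ (if subj X f then [s] else []))
  end.

(* tau_formula(s, phi); the fresh variable is one larger than every variable
   occurring in s, t or phi. *)
Fixpoint tr_form (s : term) (p : form) : aform :=
  match p with
  | Atom P ts => AAtom P (map (tr_term s) ts ++ (if subjR X P then [s] else []))
  | Eqf t1 t2 => AEqf (tr_term s t1) (tr_term s t2)
  | Neg q => ANeg (tr_form s q)
  | And q r => AAnd (tr_form s q) (tr_form s r)
  | All x q => AAll x (tr_form s q)
  | Kt t q =>
      let x := S (Nat.max (maxv s) (Nat.max (maxv t) (maxv_form q))) in
      AEx x (AAnd (AEqf (Var x) (tr_term s t))
                  (AAnd (AAtom (Apred X) [Var x]) (AK (tr_form (Var x) q))))
  end.

(* A structure (Sigma- or Sigma'-) with domain D agreeing with I_o on the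
   objective symbols: only the interpretation of the subjective symbols is
   stored; objective symbols are always interpreted by I_o (see [interp]). *)
Record str := mkStr {
  sf : Fs X -> list (D X) -> D X;
  sr : Rs X -> list (D X) -> Prop
}.

Definition interp (I : str) (f : Fs X) (l : list (D X)) : D X :=
  if subj X f then sf I f l else Io X f l.
Definition interpR (I : str) (P : Rs X) (l : list (D X)) : Prop :=
  if subjR X P then sr I P l else IoR X P l.

Definition normal (J : str) : Prop :=
  (forall f l d, subj X f = true -> length l = ar X f -> ~ Ag X d ->
     sf J f (l ++ [d]) = delta X) /\
  (forall P l d, subjR X P = true -> length l = arR X P -> ~ Ag X d ->
     ~ sr J P (l ++ [d])).

Definition asg := nat -> D X.
Definition upd (a : asg) (x : nat) (d : D X) : asg :=
  fun y => if Nat.eqb y x then d else a y.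

Fixpoint teval (I : str) (a : asg) (t : term) : D X :=
  match t with
  | Var x => a x
  | App f ts => interp I f (map (teval I a) ts)
  end.

Inductive tv := tT | tF | tU.
Definition tinv (v : tv) : tv := match v with tT => tF | tF => tT | tU => tU end.
(* glb in the truth order f < u < t *)
Definition tmin (v w : tv) : tv :=
  match v, w with
  | tF, _ | _, tF => tF
  | tU, _ | _, tU => tU
  | tT, tT => tT
  end.
Definition tbool (b : Prop) : tv :=
  if excluded_middle_informative b then tT else tF.
Definition tglb (v : D X -> tv) : tv :=
  if excluded_middle_informative (forall d, v d = tT) then tT
  else if excluded_middle_informative (exists d, v d = tF) then tF
  else tU.

Definition pws := str -> Prop.
Definition dpws := D X -> pws.            (* only the agents' components matter *)
Record dbp := mkDBP { Bc : dpws; Bl : dpws }.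

Definition consistent (B : dbp) : Prop :=
  forall A, Ag X A -> forall I, Bl B A I -> Bc B A I.
Definition univ_consistent (B : dbp) : Prop :=
  forall A, Ag X A -> exists I, Bl B A I.

Fixpoint val (B : dbp) (I : str) (a : asg) (p : form) : tv :=
  match p with
  | Atom P ts => tbool (interpR I P (map (teval I a) ts))
  | Eqf t1 t2 => tbool (teval I a t1 = teval I a t2)
  | Neg q => tinv (val B I a q)
  | And q r => tmin (val B I a q) (val B I a r)
  | All x q => tglb (fun d => val B I (upd a x d) q)
  | Kt t q =>
      let A := teval I a t in
      if excluded_middle_informative
           (Ag X A /\ forall J, Bc B A J -> val B J a q = tT) then tT
      else if excluded_middle_informative
           (~ Ag X A \/ exists J, Bl B A J /\ val B J a q = tF) then tF
      else tU
  end.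

Fixpoint aval (P S : pws) (J : str) (a : asg) (p : aform) : tv :=
  match p with
  | AAtom R ts => tbool (interpR J R (map (teval J a) ts))
  | AEqf t1 t2 => tbool (teval J a t1 = teval J a t2)
  | ANeg q => tinv (aval P S J a q)
  | AAnd q r => tmin (aval P S J a q) (aval P S J a r)
  | AAll x q => tglb (fun d => aval P S J (upd a x d) q)
  | AK q =>
      if excluded_middle_informative (forall J', P J' -> aval P S J' a q = tT)
      then tT
      else if excluded_middle_informative (exists J', S J' /\ aval P S J' a q = tF)
      then tF
      else tU
  end.

Fixpoint unsnoc (l : list (D X)) : option (list (D X) * D X) :=
  match l with
  | [] => None
  | [d] => Some ([], d)
  | d :: l' => match unsnoc l' with
               | Some (m, e) => Some (d :: m, e)
               | None => None
               end
  end.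

(* tau_structure((I_A)_A): f(dbar, d) = f^{I_d}(dbar) if d is an agent,
   delta otherwise; similarly for relations. *)
Definition tau_structure (I : D X -> str) : str :=
  mkStr (fun f l => match unsnoc l with
                    | Some (m, d) =>
                        if excluded_middle_informative (Ag X d)
                        then sf (I d) f m else delta X
                    | None => delta X
                    end)
        (fun P l => match unsnoc l with
                    | Some (m, d) => Ag X d /\ sr (I d) P m
                    | None => False
                    end).

Definition tau_pws (Q : dpws) : pws :=
  fun J => exists I : D X -> str,
      (forall A, Ag X A -> Q A (I A)) /\ J = tau_structure I.

Definition tau_beliefpair (B : dbp) : pws * pws :=
  (tau_pws (Bc B), tau_pws (Bl B)).

(* J_t for a closed Sigma'-term t (t^J does not depend on the assignment;
   we use the constant assignment delta). *)
Definition struct_at (J : str) (t : term) : str :=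
  let d := teval J (fun _ => delta X) t in
  mkStr (fun f l => sf J f (l ++ [d])) (fun P l => sr J P (l ++ [d])).

End Syntax.

(* Main.v *)
Require Import Defs.
From Stdlib Require Import List Arith Lia ClassicalEpsilon FunctionalExtensionality PropExtensionality.
Import ListNotations.

Section H.
Context {X : setup}.

Definition struct_d (J : str X) (d : D X) : str X :=
  mkStr X (fun f l => sf J f (l ++ [d])) (fun P l => sr J P (l ++ [d])).

Fixpoint term_ind2 (P : term X -> Prop) (HV : forall n, P (Var X n))
  (HA : forall f ts, Forall P ts -> P (App f ts)) (t : term X) : P t :=
  match t with
  | Var _ n => HV n
  | App f ts => HA f ts ((fix g l := match l return Forall P l with
        | [] => Forall_nil _
        | u :: l' => Forall_cons _ (term_ind2 P HV HA u) (g l') end) ts)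
  end.

Lemma occurs_App y f (ts : list (term X)) : occurs y (App f ts) <-> Exists (occurs y) ts.
Proof.
  simpl. induction ts as [|u l IH]; simpl.
  - split; [tauto| intro H; inversion H].
  - rewrite IH. split.
    + intros [H|H]; [left|right]; auto.
    + intro H; inversion H; subst; auto.
Qed.

Definition fmax (ts : list (term X)) := fold_right (fun u n => Nat.max (maxv u) n) 0 ts.

Lemma maxv_App f (ts : list (term X)) : maxv (App f ts) = fmax ts.
Proof. simpl. induction ts as [|u l IH]; simpl; auto. Qed.

Lemma fmax_in u ts : In u ts -> maxv u <= fmax ts.
Proof. induction ts as [|v l IH]; simpl; [tauto|]. intros [->|H]; [lia|]. specialize (IH H); lia. Qed.

Lemma occurs_maxv y (u : term X) : occurs y u -> y <= maxv u.
Proof.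
  induction u as [n|f ts Hf] using term_ind2.
  - simpl; lia.
  - rewrite occurs_App, maxv_App. intro H. apply Exists_exists in H as [v [Hin Hv]].
    rewrite Forall_forall in Hf. specialize (Hf v Hin Hv). pose proof (fmax_in _ _ Hin); lia.
Qed.

Lemma teval_ext (I : str X) (u : term X) : forall a a',
  (forall y, occurs y u -> a y = a' y) -> teval I a u = teval I a' u.
Proof.
  induction u as [n|f ts Hf] using term_ind2; intros a a' H.
  - simpl. apply H. simpl; auto.
  - simpl. f_equal. apply map_ext_in. intros v Hin.
    rewrite Forall_forall in Hf. apply Hf; auto. intros y Hy. apply H.
    apply occurs_App. apply Exists_exists. eauto.
Qed.

Lemma tr_term_eval (J : str X) a s (u : term X) :
  teval J a (tr_term s u) = teval (struct_d J (teval J a s)) a u.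
Proof.
  induction u as [n|f ts Hf] using term_ind2.
  - reflexivity.
  - simpl. unfold interp. rewrite map_app, map_map.
    assert (E : map (fun x => teval J a (tr_term s x)) ts = map (teval (struct_d J (teval J a s)) a) ts).
    { apply map_ext_in. intros v Hin. rewrite Forall_forall in Hf. apply Hf; auto. }
    rewrite E. destruct (subj X f); simpl; rewrite ?app_nil_r; reflexivity.
Qed.

Lemma unsnoc_app (l : list (D X)) d : unsnoc X (l ++ [d]) = Some (l, d).
Proof.
  induction l as [|x l IH]; simpl; auto.
  rewrite IH. destruct l; simpl; auto.
Qed.

Lemma struct_d_tau (I : D X -> str X) A : Ag X A -> struct_d (tau_structure I) A = I A.
Proof.
  intro HA. transitivity (mkStr X (sf (I A)) (sr (I A))); [|destruct (I A); reflexivity].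
  unfold struct_d, tau_structure; simpl. f_equal.
  - extensionality f; extensionality l. rewrite unsnoc_app.
    destruct (excluded_middle_informative (Ag X A)); tauto.
  - extensionality f; extensionality l. rewrite unsnoc_app.
    apply propositional_extensionality; tauto.
Qed.

Lemma if3_ext (P1 P2 Q1 Q2 : Prop) : (P1 <-> P2) -> (~P1 -> (Q1 <-> Q2)) ->
  (if excluded_middle_informative P1 then tT else if excluded_middle_informative Q1 then tF else tU)
  = (if excluded_middle_informative P2 then tT else if excluded_middle_informative Q2 then tF else tU).
Proof.
  intros H1 H2.
  destruct (excluded_middle_informative P1), (excluded_middle_informative P2); try tauto.
  destruct (excluded_middle_informative Q1), (excluded_middle_informative Q2); firstorder.
Qed.

Lemma val_ext B (q : form X) : forall (I : str X) a a',
  (forall y, y <= maxv_form q -> a y = a' y) -> val B I a q = val B I a' q.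
Proof.
  induction q as [P ts|t1 t2|q IH|q1 IH1 q2 IH2|x q IH|t q IH]; intros I a a' H; simpl in *.
  - f_equal. f_equal. apply map_ext_in. intros u Hin. apply teval_ext.
    intros y Hy. apply H. pose proof (occurs_maxv _ _ Hy). pose proof (fmax_in _ _ Hin).
    unfold fmax in *. lia.
  - f_equal. rewrite (teval_ext I t1 a a'), (teval_ext I t2 a a'); auto;
      intros y Hy; apply H; pose proof (occurs_maxv _ _ Hy); lia.
  - f_equal; auto.
  - f_equal; [apply IH1|apply IH2]; intros; apply H; lia.
  - f_equal. extensionality d. apply IH. intros y Hy. unfold upd.
    destruct (Nat.eqb y x); auto. apply H; lia.
  - rewrite (teval_ext I t a a') by (intros y Hy; apply H; pose proof (occurs_maxv _ _ Hy); lia).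
    assert (E : forall J, val B J a q = val B J a' q) by (intro J; apply IH; intros; apply H; lia).
    apply if3_ext.
    + split; intros [h1 h2]; split; auto; intros J HJ; [rewrite <- E|rewrite E]; auto.
    + intros _. split; intros [h|[J [h1 h2]]]; auto; right; exists J;
        [rewrite <- E|rewrite E]; auto.
Qed.
End H.
Section H2.
Context {X : setup}.

Lemma extend (Q : dpws X) (HQ : forall A', Ag X A' -> exists I, Q A' I) A I' :
  Q A I' -> exists Ifam : D X -> str X, (forall A', Ag X A' -> Q A' (Ifam A')) /\ Ifam A = I'.
Proof.
  intro H.
  pose (dflt := mkStr X (fun _ _ => delta X) (fun _ _ => False)).
  exists (fun A' => if excluded_middle_informative (A' = A) then I'
               else epsilon (inhabits dflt) (Q A')).
  split.
  - intros A' HA'. destruct (excluded_middle_informative (A' = A)) as [->|]; auto.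
    apply epsilon_spec. auto.
  - destruct (excluded_middle_informative (A = A)); congruence.
Qed.

Lemma tglb_one (w : D X -> tv) A : (forall d, d <> A -> w d = tT) -> tglb X w = w A.
Proof.
  intro H. unfold tglb.
  destruct (excluded_middle_informative (forall d, w d = tT)) as [h|h].
  - auto.
  - destruct (excluded_middle_informative (exists d, w d = tF)) as [[d hd]|h2].
    + destruct (excluded_middle_informative (d = A)) as [->|n]; auto.
      rewrite H in hd; auto; discriminate.
    + destruct (w A) eqn:E; auto.
      * exfalso; apply h; intro d. destruct (excluded_middle_informative (d = A)) as [->|n]; auto.
      * exfalso; apply h2; eauto.
Qed.

Lemma ex_case (A : D X) (k : D X -> tv) :
  tinv (tglb X (fun d => tinv (tmin (tbool (d = A)) (tmin (tbool (Ag X d)) (k d)))))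
  = if excluded_middle_informative (Ag X A /\ k A = tT) then tT
    else if excluded_middle_informative (~ Ag X A \/ k A = tF) then tF else tU.
Proof.
  rewrite (tglb_one _ A).
  - unfold tbool.
    destruct (excluded_middle_informative (A = A)); [|congruence].
    destruct (excluded_middle_informative (Ag X A)) as [h|h];
    destruct (k A) eqn:E; simpl;
    repeat match goal with |- context [excluded_middle_informative ?P] =>
      destruct (excluded_middle_informative P) end; try reflexivity;
    try (exfalso; intuition congruence).
  - intros d hd. unfold tbool at 1. destruct (excluded_middle_informative (d = A)); [congruence|].
    reflexivity.
Qed.
End H2.
Lemma main_gen (X : setup) (B : dbp X) (HC : consistent B) (HU : univ_consistent B) :
  forall (q : form X) s J a, (forall z, occurs z s -> maxv_form q < z) ->
  aval (tau_pws (Bc B)) (tau_pws (Bl B)) J a (tr_form s q)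
  = val B (struct_d J (teval J a s)) a q.
Proof.
  induction q as [P ts|t1 t2|q IH|q1 IH1 q2 IH2|x q IH|t q IH]; intros s J a Hs; simpl in *.
  - f_equal. unfold interpR. rewrite map_app, map_map.
    rewrite (map_ext _ _ (tr_term_eval J a s)).
    destruct (subjR X P); simpl; rewrite ?app_nil_r; reflexivity.
  - rewrite !tr_term_eval. reflexivity.
  - f_equal; auto.
  - f_equal; [apply IH1|apply IH2]; intros z Hz; specialize (Hs z Hz); lia.
  - f_equal. extensionality d. rewrite IH by (intros z Hz; specialize (Hs z Hz); lia).
    rewrite (teval_ext J s (upd a x d) a); auto.
    intros y Hy. specialize (Hs y Hy). unfold upd. destruct (Nat.eqb_spec y x); auto. lia.
  - set (x := S _).
    set (A := teval (struct_d J (teval J a s)) a t).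
    set (k := fun d => if excluded_middle_informative
                (forall J', tau_pws (Bc B) J' -> val B (struct_d J' d) a q = tT) then tT
              else if excluded_middle_informative
                (exists J', tau_pws (Bl B) J' /\ val B (struct_d J' d) a q = tF) then tF
              else tU).
    assert (Hx : forall d, upd a x d x = d) by (intro d; unfold upd; rewrite Nat.eqb_refl; auto).
    assert (Hxq : forall d, forall y, y <= maxv_form q -> upd a x d y = a y).
    { intros d y Hy. unfold upd. destruct (Nat.eqb_spec y x); auto. subst x; lia. }
    assert (Hcore : forall J' d, aval (tau_pws (Bc B)) (tau_pws (Bl B)) J' (upd a x d)
                 (tr_form (Var X x) q) = val B (struct_d J' d) a q).
    { intros J' d. rewrite IH.
      - simpl. rewrite Hx. apply val_ext. auto.
      - simpl. intros z ->. subst x; lia. }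
    assert (Hf : forall d, tinv
          (tmin (tbool (upd a x d x = teval J (upd a x d) (tr_term s t)))
             (tmin (tbool (interpR J (Apred X) [upd a x d x]))
                (if
                  excluded_middle_informative
                    (forall J' : str X,
                     tau_pws (Bc B) J' ->
                     aval (tau_pws (Bc B)) (tau_pws (Bl B)) J'
                       (upd a x d) (tr_form (Var X x) q) =
                     tT)
                 then tT
                 else
                  if
                   excluded_middle_informative
                     (exists J' : str X,
                        tau_pws (Bl B) J' /\
                        aval (tau_pws (Bc B)) (tau_pws (Bl B)) J'
                          (upd a x d) (tr_form (Var X x) q) =
                        tF)
                  then tF
                  else tU))) = tinv (tmin (tbool (d = A)) (tmin (tbool (Ag X d)) (k d)))).
    { intro d. rewrite Hx. f_equal. f_equal.
      - f_equal. rewrite tr_term_eval. unfold A.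
        rewrite (teval_ext J s (upd a x d) a).
        + f_equal. apply teval_ext. intros y Hy. pose proof (occurs_maxv _ _ Hy). unfold upd.
          destruct (Nat.eqb_spec y x); auto. subst x; lia.
        + intros y Hy. pose proof (occurs_maxv _ _ Hy). unfold upd.
          destruct (Nat.eqb_spec y x); auto. subst x; lia.
      - f_equal.
        + f_equal. unfold interpR. rewrite (Apred_obj X). apply propositional_extensionality.
          apply Apred_int.
        + unfold k. apply if3_ext.
          * split; intros H J' HJ'; [rewrite <- Hcore|rewrite Hcore]; auto.
          * intros _. split; intros [J' [h1 h2]]; exists J'; split; auto;
              [rewrite <- Hcore|rewrite Hcore]; auto. }
    transitivity (tinv (tglb X (fun d => tinv (tmin (tbool (d = A)) (tmin (tbool (Ag X d)) (k d)))))).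
    { f_equal. f_equal. extensionality d. apply Hf. }
    rewrite ex_case.
    assert (HQc : forall A', Ag X A' -> exists I, Bc B A' I).
    { intros A' h. destruct (HU A' h) as [I hI]. exists I. apply HC; auto. }
    assert (C1 : Ag X A -> ((forall J', tau_pws (Bc B) J' -> val B (struct_d J' A) a q = tT)
                 <-> (forall I, Bc B A I -> val B I a q = tT))).
    { intro hA. split.
      - intros H I hI. destruct (extend _ HQc A I hI) as [F [hF1 hF2]].
        rewrite <- hF2, <- (struct_d_tau F A hA). apply H. exists F; auto.
      - intros H J' [F [hF ->]]. rewrite struct_d_tau by auto. auto. }
    assert (E1 : Ag X A -> ((exists J', tau_pws (Bl B) J' /\ val B (struct_d J' A) a q = tF)
                 <-> (exists I, Bl B A I /\ val B I a q = tF))).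
    { intro hA. split.
      - intros [J' [[F [hF ->]] h]]. rewrite struct_d_tau in h by auto. eauto.
      - intros [I [hI h]]. destruct (extend _ HU A I hI) as [F [hF1 hF2]].
        exists (tau_structure F). split; [exists F; auto|].
        rewrite struct_d_tau by auto. congruence. }
    unfold k.
    apply if3_ext.
    + split; intros [hA h]; split; auto; revert h.
      * destruct (excluded_middle_informative (forall J', tau_pws (Bc B) J' -> _)) as [c|c];
          [intros _; apply C1; auto|].
        destruct (excluded_middle_informative (exists J', _)); discriminate.
      * intro h. destruct (excluded_middle_informative (forall J', tau_pws (Bc B) J' -> _)) as [c|c];
          auto. exfalso; apply c. apply C1; auto.
    + intros hn. destruct (excluded_middle_informative (Ag X A)) as [hA|hA]; [|tauto].
      split.
      * intros [h|h]; [tauto|right]. revert h.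
        destruct (excluded_middle_informative (forall J', tau_pws (Bc B) J' -> _)) as [c|c];
          [discriminate|].
        destruct (excluded_middle_informative (exists J', _)) as [c2|c2];
          [intros _; apply E1; auto|discriminate].
      * intros [h|h]; [tauto|right].
        destruct (excluded_middle_informative (forall J', tau_pws (Bc B) J' -> _)) as [c|c].
        { exfalso; apply hn. split; auto. }
        destruct (excluded_middle_informative (exists J', _)) as [c2|c2]; auto.
        exfalso; apply c2; apply E1; auto.
Qed.

Theorem mainTheorem10 (X : setup) (t : term X) (phi : form X) (B : dbp X)
  (J : str X) :
  closed_term t -> wf_term' t ->
  sentence phi -> wf_form phi ->
  consistent B -> univ_consistent B ->
  normal J ->
  forall a : asg X,
    aval (fst (tau_beliefpair B)) (snd (tau_beliefpair B)) J a (tr_form t phi)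
    = val B (struct_at J t) a phi.
Proof.
  intros Hcl _ _ _ HC HU _ a. simpl.
  rewrite (main_gen X B HC HU phi t J a) by (intros z Hz; exfalso; exact (Hcl z Hz)).
  unfold struct_at. change (let d := teval J (fun _ => delta X) t in ?F d) with
    (struct_d J (teval J (fun _ => delta X) t)).
  rewrite (teval_ext J t a (fun _ => delta X)); auto.
  intros y Hy; exfalso; exact (Hcl y Hy).
Qed.
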